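(* Let $D$ be a digraph with $\chi(D)>\omega$. Then there is a subdigraph $D_0\subseteq D$ with $\chi(D_0)>\omega$ such that every vertex of $D_0$ has infinite in-degree and infinite out-degree in $D_0$.
   Context: A digraph is a pair $D=(V,E)$ with $E\subseteq V^2$ such that $uv\in E$ implies $vu\notin E$. The dichromatic number $\chi(D)$ is the minimal number of acyclic vertex sets (sets inducing no directed cycle) needed to cover the vertex set of $D$. *)

(* Defs.v *)
From Stdlib Require Import List.
Import ListNotations.

Section Digraphs.
Variable V : Type.

Definition is_digraph (S : V -> Prop) (A : V -> V -> Prop) : Prop :=
  (forall u v, A u v -> S u /\ S v) /\ (forall u v, A u v -> ~ A v u).

Definition subdigraph (S0 : V -> Prop) (A0 : V -> V -> Prop)
  (S : V -> Prop) (A : V -> V -> Prop) : Prop :=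
  is_digraph S0 A0 /\ (forall v, S0 v -> S v) /\ (forall u v, A0 u v -> A u v).

Fixpoint walk (A : V -> V -> Prop) (x : V) (l : list V) : Prop :=
  match l with
  | [] => True
  | y :: l' => A x y /\ walk A y l'
  end.

Definition directed_cycle (A : V -> V -> Prop) (x : V) (l : list V) : Prop :=
  NoDup (x :: l) /\ walk A x l /\ A (last l x) x.

Definition acyclic_set (A : V -> V -> Prop) (X : V -> Prop) : Prop :=
  ~ exists x l, directed_cycle A x l /\ X x /\ Forall X l.

(* chi(S, A) <= omega: the vertex set can be covered by countably many
   acyclic vertex sets (a finite cover is padded with empty sets). *)
Definition dichromatic_le_omega (S : V -> Prop) (A : V -> V -> Prop) : Prop :=
  exists C : nat -> (V -> Prop),
    (forall n, (forall v, C n v -> S v) /\ acyclic_set A (C n)) /\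
    (forall v, S v -> exists n, C n v).

Definition finite_pred (P : V -> Prop) : Prop :=
  exists l : list V, forall x, P x -> In x l.

Definition infinite_indeg (A : V -> V -> Prop) (v : V) : Prop :=
  ~ finite_pred (fun u => A u v).
Definition infinite_outdeg (A : V -> V -> Prop) (v : V) : Prop :=
  ~ finite_pred (fun u => A v u).

End Digraphs.
Arguments is_digraph {V}.
Arguments subdigraph {V}.
Arguments walk {V}.
Arguments directed_cycle {V}.
Arguments acyclic_set {V}.
Arguments dichromatic_le_omega {V}.
Arguments finite_pred {V}.
Arguments infinite_indeg {V}.
Arguments infinite_outdeg {V}.

(* Main.v *)
Require Import Defs.
From Stdlib Require Import List Arith Lia Classical ClassicalEpsilon Cantor.
From mathcomp Require classical_sets.
Import ListNotations.

Definition rb {T : Type} (R : T -> T -> Prop) : T -> T -> bool :=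
  fun a b => if excluded_middle_informative (R a b) then true else false.

Lemma rbP {T : Type} (R : T -> T -> Prop) a b : rb R a b = true <-> R a b.
Proof. unfold rb; destruct (excluded_middle_informative (R a b)); split; congruence || tauto. Qed.

Lemma zornP (T : Type) (t0 : T) (R : T -> T -> Prop) :
  (forall t, R t t) -> (forall r s t, R r s -> R s t -> R r t) ->
  (forall A : T -> Prop, (forall s t, A s -> A t -> R s t \/ R t s) ->
     exists t, forall s, A s -> R s t) ->
  exists t, forall s, R t s -> R s t.
Proof.
  intros Hr Ht Hc.
  destruct (@classical_sets.ZL_preorder T t0 (rb R)) as [t Ht0].
  - intro t; apply rbP; auto.
  - intros r s u H1 H2; apply rbP; apply rbP in H1; apply rbP in H2; eauto.
  - intros A HA. destruct (Hc A) as [t Hts].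
    + intros s u Hs Hu; destruct (HA s u Hs Hu) as [h|h]; [left|right]; apply rbP; exact h.
    + exists t; intros s Hs; apply rbP; auto.
  - exists t; intros s Hs. apply rbP. apply Ht0. apply rbP. exact Hs.
Qed.

Section Col.
Variable V : Type.
Variable H : V -> V -> Prop.
Hypothesis Hfin : forall a, exists l : list V, forall x, H a x -> In x l.
Hypothesis Hirr : forall a, ~ H a a.

Record obj2 := { Z : V -> Prop; cc : V -> nat;
  closed : forall a b, Z a -> H a b -> Z b;
  proper : forall a b, Z a -> Z b -> H a b -> cc a <> cc b }.

Definition R2 (o o' : obj2) := (forall x, Z o x -> Z o' x) /\ (forall x, Z o x -> cc o x = cc o' x).

Definition obj0 : obj2.
Proof. refine {| Z := fun _ => False; cc := fun _ => 0 |}; tauto. Defined.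

Section Chain.
Variable Ch : obj2 -> Prop.
Hypothesis Htot : forall s t, Ch s -> Ch t -> R2 s t \/ R2 t s.
Definition Zu x := exists o, Ch o /\ Z o x.
Definition ccu x := cc (epsilon (inhabits obj0) (fun o => Ch o /\ Z o x)) x.
Lemma ccu_eq o x : Ch o -> Z o x -> ccu x = cc o x.
Proof.
  intros Ho Hx. unfold ccu.
  destruct (epsilon_spec (inhabits obj0) (fun o => Ch o /\ Z o x) (ex_intro _ o (conj Ho Hx))) as [H1 H2].
  set (o' := epsilon _ _) in *.
  destruct (Htot o o' Ho H1) as [[_ h]|[_ h]].
  - symmetry; auto.
  - auto.
Qed.
Definition ub : obj2.
Proof.
  refine {| Z := Zu; cc := ccu |}.
  - intros a b [o [Ho Ha]] Hab. exists o; split; auto. eapply closed; eauto.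
  - intros a b [o1 [Ho1 Ha]] [o2 [Ho2 Hb]] Hab.
    rewrite (ccu_eq o1 a Ho1 Ha), (ccu_eq o2 b Ho2 Hb).
    destruct (Htot o1 o2 Ho1 Ho2) as [[h1 h2]|[h1 h2]].
    + rewrite h2 by auto. apply proper; auto.
    + rewrite (h2 b) by auto. apply proper; auto.
Defined.
Lemma ub_ub : forall o, Ch o -> R2 o ub.
Proof.
  intros o Ho; split.
  - intros x Hx; exists o; auto.
  - intros x Hx; simpl; symmetry; apply ccu_eq; auto.
Qed.
End Chain.

Section Ext.
Variable ob : obj2.
Variable a0 : V.
Hypothesis Ha0 : ~ Z ob a0.
Definition fH (a : V) : list V := proj1_sig (constructive_indefinite_description _ (Hfin a)).
Lemma fH_spec a x : H a x -> In x (fH a).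
Proof. unfold fH. destruct (constructive_indefinite_description _ _); simpl; auto. Qed.
Fixpoint Lst (n : nat) : list V :=
  match n with 0 => [a0] | S n => Lst n ++ flat_map fH (Lst n) end.
Definition Reach y := exists n, In y (Lst n).
Lemma Reach_cl a b : Reach a -> H a b -> Reach b.
Proof.
  intros [n Hn] Hab. exists (S n). simpl. apply in_or_app; right.
  apply in_flat_map. exists a; split; auto. apply fH_spec; auto.
Qed.
Definition pos y : nat * nat := epsilon (inhabits (0,0)) (fun p => nth_error (Lst (fst p)) (snd p) = Some y).
Lemma pos_spec y : Reach y -> nth_error (Lst (fst (pos y))) (snd (pos y)) = Some y.
Proof.
  intros [n Hn]. destruct (In_nth_error _ _ Hn) as [i Hi].
  apply (epsilon_spec (inhabits (0,0)) (fun p => nth_error (Lst (fst p)) (snd p) = Some y)).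
  exists (n, i); auto.
Qed.
Definition mm y := S (list_max (map (cc ob) (fH y))).
Definition newc y := to_nat (to_nat (pos y), mm y).
Definition cc' x := if excluded_middle_informative (Z ob x) then cc ob x else newc x.
Definition ext : obj2.
Proof.
  refine {| Z := fun x => Z ob x \/ Reach x; cc := cc' |}.
  - intros a b [Ha|Ha] Hab; [left; eapply closed; eauto | right; eapply Reach_cl; eauto].
  - intros a b Ha Hb Hab. unfold cc'.
    destruct (excluded_middle_informative (Z ob a)) as [za|za];
    destruct (excluded_middle_informative (Z ob b)) as [zb|zb].
    + apply proper; auto.
    + exfalso; apply zb; eapply closed; eauto.
    + assert (cc ob b < mm a).
      { unfold mm. apply Nat.lt_succ_r.
        assert (Hl := proj1 (list_max_le (map (cc ob) (fH a)) _) (le_n _)).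
        rewrite Forall_forall in Hl. apply Hl. apply in_map. apply fH_spec; auto. }
      unfold newc. pose proof (to_nat_non_decreasing (to_nat (pos a)) (mm a)). lia.
    + destruct Ha as [Ha|Ha]; [tauto|]. destruct Hb as [Hb|Hb]; [tauto|].
      unfold newc; intro E.
      apply (f_equal of_nat) in E. rewrite !cancel_of_to in E. injection E as E _.
      apply (f_equal of_nat) in E. rewrite !cancel_of_to in E.
      pose proof (pos_spec a Ha) as pa. pose proof (pos_spec b Hb) as pb.
      rewrite E in pa. rewrite pa in pb. injection pb as Eab. subst. exact (Hirr _ Hab).
Defined.
Lemma ext_ge : R2 ob ext.
Proof.
  split; [intros x Hx; left; auto|]. intros x Hx; simpl; unfold cc'.
  destruct (excluded_middle_informative (Z ob x)); tauto.
Qed.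
Lemma ext_a0 : Z ext a0.
Proof. right. exists 0. simpl; auto. Qed.
End Ext.

Lemma coloring : exists c : V -> nat, forall a b, H a b -> c a <> c b.
Proof.
  destruct (zornP obj2 obj0 R2) as [ob Hmax].
  - intro t; split; auto.
  - intros r s t [h1 h2] [h3 h4]; split; auto. intros x Hx; rewrite h2 by auto; auto.
  - intros A HA. exists (ub A HA). apply ub_ub.
  - assert (all : forall x, Z ob x).
    { intro x. apply NNPP. intro Hx.
      destruct (Hmax (ext ob x) (ext_ge ob x)) as [h _].
      apply Hx, h, ext_a0. }
    exists (cc ob). intros a b Hab. apply proper; auto.
Qed.
End Col.

Section Main.
Variable V : Type.
Variable S : V -> Prop.
Variable A : V -> V -> Prop.
Hypothesis HD : is_digraph S A.
Implicit Types (x y u v a b : V) (l : list V).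

Fixpoint warc (x : V) (l : list V) (a b : V) : Prop :=
  match l with [] => False | y :: l' => (a = x /\ b = y) \/ warc y l' a b end.
Definition carc x l a b := warc x l a b \/ (a = last l x /\ b = x).

Lemma warc_A x l a b : walk A x l -> warc x l a b -> A a b.
Proof.
  revert x; induction l as [|y l IH]; simpl; intros x Hw Hc; [tauto|].
  destruct Hw as [h1 h2]. destruct Hc as [[-> ->]|Hc]; auto. eapply IH; eauto.
Qed.

Lemma warc_In x l a b : warc x l a b -> In a (x::l) /\ In b (x::l).
Proof.
  revert x; induction l as [|y l IH]; simpl; intros x Hc; [tauto|].
  destruct Hc as [[-> ->]|Hc]; [tauto|]. destruct (IH y Hc) as [h1 h2]; simpl in *; tauto.
Qed.

Lemma last_cons x y l : last (y::l) x = last l y.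
Proof. revert x y; induction l as [|z l IH]; intros x y; [reflexivity|]. change (last (z::l) x = last (z::l) y). rewrite !IH; reflexivity. Qed.

Lemma last_In x l : In (last l x) (x::l).
Proof.
  revert x; induction l as [|y l IH]; intros x; [simpl; auto|].
  rewrite last_cons. right. apply IH.
Qed.



Lemma carc_In x l a b : carc x l a b -> In a (x::l) /\ In b (x::l).
Proof.
  intros [h|[-> ->]]; [apply warc_In; auto|]. split; [apply last_In|left; auto].
Qed.

Lemma carc_A x l a b : directed_cycle A x l -> carc x l a b -> A a b.
Proof.
  intros [_ [Hw Hl]] [h|[-> ->]]; [eapply warc_A; eauto|auto].
Qed.

Lemma succ_ex x l v : In v (x::l) -> exists b, carc x l v b.
Proof.
  revert x; induction l as [|y l IH]; intros x Hv.
  - destruct Hv as [<-|[]]. exists x; right; simpl; auto.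
  - destruct Hv as [<-|Hv].
    + exists y; left; simpl; auto.
    + destruct (IH y Hv) as [b [Hb|[Hb1 Hb2]]].
      * exists b; left; simpl; auto.
      * exists x; right; split; auto. rewrite last_cons; auto.
Qed.

Lemma pred_ex x l v : In v (x::l) -> exists a, carc x l a v.
Proof.
  revert x; induction l as [|y l IH]; intros x Hv.
  - destruct Hv as [<-|[]]. exists x; right; simpl; auto.
  - destruct Hv as [<-|Hv].
    + exists (last (y::l) x); right; auto.
    + destruct (IH y Hv) as [a [Ha|[Ha1 Ha2]]].
      * exists a; left; simpl; auto.
      * exists x; left; simpl; auto.
Qed.

Lemma irr a : ~ A a a.
Proof. intro h. exact (proj2 HD a a h h). Qed.

Record obj1 := { Y1 : V -> Prop; F1 : V -> V -> Prop;
  o1_sub : forall x, Y1 x -> S x;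
  o1_fin : forall x, Y1 x -> finite_pred (F1 x);
  o1_cyc : forall x l, directed_cycle A x l -> (exists v, In v (x::l) /\ Y1 v) ->
     exists a b, carc x l a b /\ ((Y1 a /\ F1 a b) \/ (Y1 b /\ F1 b a)) }.

Definition R1 (o o' : obj1) := (forall x, Y1 o x -> Y1 o' x) /\
  (forall x, Y1 o x -> forall y, F1 o x y <-> F1 o' x y).

Definition ob0 : obj1.
Proof.
  refine {| Y1 := fun _ => False; F1 := fun _ _ => False |}; try tauto.
  intros x l _ [v [_ []]].
Defined.

Section Chain1.
Variable Ch : obj1 -> Prop.
Hypothesis Htot : forall s t, Ch s -> Ch t -> R1 s t \/ R1 t s.
Definition Yu x := exists o, Ch o /\ Y1 o x.
Definition Fu x y := exists o, Ch o /\ Y1 o x /\ F1 o x y.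
Lemma Fu_eq o x y : Ch o -> Y1 o x -> (Fu x y <-> F1 o x y).
Proof.
  intros Ho Hx; split; [|intro h; exists o; auto].
  intros [o' [Ho' [Hx' Hf]]]. destruct (Htot o o' Ho Ho') as [[_ h]|[_ h]].
  - apply (h x Hx y); auto.
  - apply (h x Hx' y); auto.
Qed.
Definition ub1 : obj1.
Proof.
  refine {| Y1 := Yu; F1 := Fu |}.
  - intros x [o [_ h]]. eapply o1_sub; eauto.
  - intros x [o [Ho Hx]]. destruct (o1_fin o x Hx) as [l Hl]. exists l.
    intros y Hy. apply Hl. apply (Fu_eq o x y Ho Hx); auto.
  - intros x l Hc [v [Hv [o [Ho Hov]]]].
    destruct (o1_cyc o x l Hc (ex_intro _ v (conj Hv Hov))) as [a [b [Hab [[h1 h2]|[h1 h2]]]]].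
    + exists a, b; split; auto. left; split; [exists o; auto|]. apply (Fu_eq o); auto.
    + exists a, b; split; auto. right; split; [exists o; auto|]. apply (Fu_eq o); auto.
Defined.
Lemma ub1_ub o : Ch o -> R1 o ub1.
Proof.
  intros Ho; split; [intros x Hx; exists o; auto|].
  intros x Hx y. simpl. symmetry. apply Fu_eq; auto.
Qed.
End Chain1.

Section Ext1.
Variable ob : obj1.
Variable v : V.
Variable Q : V -> Prop.
Hypothesis Hv : S v.
Hypothesis Hnv : ~ Y1 ob v.
Hypothesis HQ : finite_pred Q.
Hypothesis Hcyc : forall x l, directed_cycle A x l -> In v (x::l) ->
  (forall u, In u (x::l) -> ~ Y1 ob u) ->
  exists a b, carc x l a b /\ ((a = v /\ Q b) \/ (b = v /\ Q a)).
Definition Y' x := Y1 ob x \/ x = v.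
Definition F' x y := (x = v /\ Q y) \/ (x <> v /\ F1 ob x y).
Definition ext1 : obj1.
Proof.
  refine {| Y1 := Y'; F1 := F' |}.
  - intros x [h| ->]; [eapply o1_sub; eauto|auto].
  - intros x [h| ->].
    + destruct (o1_fin ob x h) as [l Hl]. exists l. intros y [[-> _]|[_ h']]; [tauto|auto].
    + destruct HQ as [l Hl]. exists l. intros y [[_ h']|[h' _]]; [auto|tauto].
  - intros x l Hc Hm.
    destruct (classic (exists u, In u (x::l) /\ Y1 ob u)) as [Hy|Hy].
    + destruct (o1_cyc ob x l Hc Hy) as [a [b [Hab [[h1 h2]|[h1 h2]]]]].
      * exists a, b; split; auto. left; split; [left; auto|right; split; auto].
        intros ->; tauto.
      * exists a, b; split; auto. right; split; [left; auto|right; split; auto].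
        intros ->; tauto.
    + assert (Hin : In v (x::l)).
      { destruct Hm as [u [Hu [Hu'| ->]]]; [exfalso; apply Hy; eauto|auto]. }
      destruct (Hcyc x l Hc Hin) as [a [b [Hab [[-> h]|[-> h]]]]].
      * intros u Hu Hu'; apply Hy; eauto.
      * exists v, b; split; auto. left; split; [right; auto|left; auto].
      * exists a, v; split; auto. right; split; [right; auto|left; auto].
Defined.
Lemma ext1_ge : R1 ob ext1.
Proof.
  split; [intros x h; left; auto|]. intros x h y; simpl; unfold F'. split.
  - intro; right; split; auto. intros ->; tauto.
  - intros [[-> _]|[_ h']]; [tauto|auto].
Qed.
End Ext1.

Lemma cyc_S x l u : directed_cycle A x l -> In u (x::l) -> S u.
Proof.
  intros Hc Hu. destruct (succ_ex x l u Hu) as [b Hb].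
  exact (proj1 ((proj1 HD) u b (carc_A x l u b Hc Hb))).
Qed.

Lemma walk_restr (P : V -> Prop) x l : walk A x l -> (forall u, In u (x::l) -> P u) ->
  walk (fun a b => A a b /\ P a /\ P b) x l.
Proof.
  revert x; induction l as [|y l IH]; simpl; intros x Hw HP; auto.
  destruct Hw as [h1 h2]. split; [repeat split; auto|]. apply IH; auto.

Qed.

Theorem main_sec : ~ dichromatic_le_omega S A ->
  exists (S0 : V -> Prop) (A0 : V -> V -> Prop),
    subdigraph S0 A0 S A /\
    ~ dichromatic_le_omega S0 A0 /\
    (forall v, S0 v -> infinite_indeg A0 v /\ infinite_outdeg A0 v).
Proof.
  intros Hchi.
  destruct (zornP obj1 ob0 R1) as [ob Hmax].
  - intro t; split; [auto|tauto].
  - intros r s t [h1 h2] [h3 h4]; split; auto. intros x Hx y. rewrite (h2 x Hx y). auto.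
  - intros Ch HCh. exists (ub1 Ch HCh). apply ub1_ub.
  - set (S0 := fun u => S u /\ ~ Y1 ob u).
    set (A0 := fun u w => A u w /\ S0 u /\ S0 w).
    exists S0, A0.
    assert (Noext : forall v Q, S v -> ~ Y1 ob v -> finite_pred Q ->
      (forall x l, directed_cycle A x l -> In v (x::l) ->
        (forall u, In u (x::l) -> ~ Y1 ob u) ->
        exists a b, carc x l a b /\ ((a = v /\ Q b) \/ (b = v /\ Q a))) -> False).
    { intros v Q Hv Hnv HQ Hc.
      destruct (Hmax (ext1 ob v Q Hv Hnv HQ Hc) (ext1_ge ob v Q Hv Hnv HQ Hc)) as [h _].
      apply Hnv, h. right; auto. }
    split; [|split].
    + split; [split|split].
      * intros u w [_ [h1 h2]]; auto.
      * intros u w [h _] [h' _]. exact (proj2 HD u w h h').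
      * intros u [h _]; auto.
      * intros u w [h _]; auto.
    + intros [C' [HC'1 HC'2]].
      set (H := fun a b => Y1 ob a /\ F1 ob a b /\ a <> b).
      destruct (coloring V H) as [c Hc].
      { intro a. destruct (classic (Y1 ob a)) as [ya|ya].
        - destruct (o1_fin ob a ya) as [l Hl]. exists l. intros x [_ [h _]]; auto.
        - exists []. intros x [h _]; tauto. }
      { intros a [_ [_ h]]; auto. }
      apply Hchi.
      exists (fun n => if Nat.even n then C' (Nat.div2 n) else (fun v => Y1 ob v /\ c v = Nat.div2 n)).
      split.
      * intro n. destruct (Nat.even n).
        -- destruct (HC'1 (Nat.div2 n)) as [h1 h2]. split.
           ++ intros v hv. exact (proj1 (h1 v hv)).
           ++ intros [x [l [Hcy [Hx Hl]]]]. apply h2. exists x, l. split; [|split; auto].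
              assert (Hall : forall u, In u (x::l) -> C' (Nat.div2 n) u).
              { intros u [<-|Hu]; auto. rewrite Forall_forall in Hl; auto. }
              destruct Hcy as [Hnd [Hw Hla]]. split; [auto|split].
              ** apply walk_restr; auto.
              ** split; [exact Hla|split; [exact (h1 _ (Hall _ (last_In x l)))|exact (h1 _ Hx)]].
        -- split.
           ++ intros v [hv _]. eapply o1_sub; eauto.
           ++ intros [x [l [Hcy [Hx Hl]]]].
              assert (Hall : forall u, In u (x::l) -> Y1 ob u /\ c u = Nat.div2 n).
              { intros u [<-|Hu]; auto. rewrite Forall_forall in Hl; auto. }
              destruct (o1_cyc ob x l Hcy (ex_intro _ x (conj (or_introl eq_refl) (proj1 Hx))))
                as [a [b [Hab Hor]]].
              destruct (carc_In x l a b Hab) as [Ia Ib].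
              pose proof (carc_A x l a b Hcy Hab) as Aab.
              assert (a <> b) by (intros ->; exact (irr b Aab)).
              destruct (Hall a Ia) as [_ ca]. destruct (Hall b Ib) as [_ cb].
              destruct Hor as [[h1 h2]|[h1 h2]].
              ** apply (Hc a b); [repeat split; auto|congruence].
              ** apply (Hc b a); [repeat split; auto|congruence].
      * intros v Hv. destruct (classic (Y1 ob v)) as [yv|yv].
        -- exists (2 * c v + 1). rewrite Nat.even_odd. rewrite Nat.add_1_r, Nat.div2_succ_double. auto.
        -- destruct (HC'2 v (conj Hv yv)) as [k Hk]. exists (2 * k).
           rewrite Nat.even_even, Nat.div2_double. auto.
    + intros v [Hv Hnv]. split.
      * intro Hfin. apply (Noext v (fun u => A0 u v) Hv Hnv Hfin).
        intros x l Hcy Hin Hall. destruct (pred_ex x l v Hin) as [a Ha].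
        exists a, v. split; auto. right; split; auto.
        destruct (carc_In x l a v Ha) as [Ia _].
        split; [apply (carc_A x l a v Hcy Ha)|split; [split; [apply (cyc_S x l a Hcy Ia)|apply (Hall a Ia)]|split; auto]].
      * intro Hfin. apply (Noext v (fun u => A0 v u) Hv Hnv Hfin).
        intros x l Hcy Hin Hall. destruct (succ_ex x l v Hin) as [b Hb].
        exists v, b. split; auto. left; split; auto.
        destruct (carc_In x l v b Hb) as [_ Ib].
        split; [apply (carc_A x l v b Hcy Hb)|split; [split; auto|split; [apply (cyc_S x l b Hcy Ib)|apply (Hall b Ib)]]].
Qed.
End Main.

Theorem proposition3p1 (V : Type) (S : V -> Prop) (A : V -> V -> Prop) :
  is_digraph S A ->
  ~ dichromatic_le_omega S A ->
  exists (S0 : V -> Prop) (A0 : V -> V -> Prop),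
    subdigraph S0 A0 S A /\
    ~ dichromatic_le_omega S0 A0 /\
    (forall v, S0 v -> infinite_indeg A0 v /\ infinite_outdeg A0 v).
Proof. intros HD; exact (main_sec V S A HD). Qed.
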